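(* For every integer $n\geq 1$, the map $\Phi$ restricts to a bijection from $\mathcal{M}^\star_n$ onto $\mathcal{GD}^\star_n$, and to a bijection from $\mathcal{M}^{s,\star}_n$ onto $\mathcal{D}^\star_n$.
   Context: For $n\geq 1$, $\mathcal{M}_n$ is the set of $n$-multisets of $[n]=\{1,\dots,n\}$, each identified with the non-decreasing sequence $\pi=\pi_1\cdots\pi_n$ of its elements. $\pi$ is superdiagonal if $i\leq\pi_i$ for all $i$. $\mathcal{M}^\star_n$ is the set of $\pi\in\mathcal{M}_n$ with no consecutive integers, i.e. $\pi_{i+1}\neq\pi_i+1$ for all $i\in[n-1]$, and $\mathcal{M}^{s,\star}_n$ is the set of superdiagonal elements of $\mathcal{M}^\star_n$. Paths are words in $U$ (up step) and $D$ (down step); $\mathcal{GD}_n$ is the set of words with $n$ letters $U$ and $n$ letters $D$ starting with $U$, and $\mathcal{D}_n\subseteq\mathcal{GD}_n$ those in which every prefix has at least as many $U$'s as $D$'s (Dyck paths). For a set $\mathcal{P}$ of paths, $\mathcal{P}^\star$ is the subset of paths not containing $DUD$ as a factor (three consecutive letters). The map $\Phi:\mathcal{M}_n\to\mathcal{GD}_n$ is $\Phi(\pi)=U^{\pi_1}DU^{\pi_2-\pi_1}D\cdots U^{\pi_n-\pi_{n-1}}DU^{n-\pi_n}$. *)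

(* Defs.v *)
From mathcomp Require Import all_boot.
Set Implicit Arguments. Unset Strict Implicit. Unset Printing Implicit Defensive.

(* An n-multiset of [n] = {1..n}, identified with the non-decreasing sequence
   pi_1 ... pi_n of its elements (stored 0-indexed: nth 0 pi i = pi_{i+1}). *)
Definition in_M (n : nat) (pi : seq nat) : bool :=
  [&& size pi == n, sorted leq pi & all (fun x => (1 <= x) && (x <= n)) pi].

Definition superdiagonal (pi : seq nat) : bool :=
  [forall i : 'I_(size pi), i.+1 <= nth 0 pi i].

Definition no_consec (pi : seq nat) : bool :=
  [forall i : 'I_(size pi), (i.+1 < size pi) ==> (nth 0 pi i.+1 != (nth 0 pi i).+1)].

Definition in_Mstar (n : nat) (pi : seq nat) : bool := in_M n pi && no_consec pi.
Definition in_Msstar (n : nat) (pi : seq nat) : bool :=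
  [&& in_M n pi, superdiagonal pi & no_consec pi].

Notation U := true.
Notation D := false.

Definition in_GD (n : nat) (p : seq bool) : bool :=
  [&& count (pred1 U) p == n, count (pred1 D) p == n & head D p == U].

Definition in_Dyck (n : nat) (p : seq bool) : bool :=
  in_GD n p &&
  [forall k : 'I_(size p).+1, count (pred1 D) (take k p) <= count (pred1 U) (take k p)].

Definition DUD_free (p : seq bool) : bool := ~~ infix [:: D; U; D] p.

Definition in_GDstar (n : nat) (p : seq bool) : bool := in_GD n p && DUD_free p.
Definition in_Dstar (n : nat) (p : seq bool) : bool := in_Dyck n p && DUD_free p.

(* Phi(pi) = U^{pi_1} D U^{pi_2-pi_1} D ... U^{pi_n-pi_{n-1}} D U^{n-pi_n} *)
Fixpoint phi_aux (n prev : nat) (s : seq nat) : seq bool :=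
  match s with
  | [::] => nseq (n - prev) U
  | x :: s' => nseq (x - prev) U ++ D :: phi_aux n x s'
  end.

Definition Phi (n : nat) (pi : seq nat) : seq bool := phi_aux n 0 pi.

Definition bij_between (A : seq nat -> bool) (B : seq bool -> bool)
  (f : seq nat -> seq bool) : Prop :=
  [/\ (forall x, A x -> B (f x)),
      (forall x y, A x -> A y -> f x = f y -> x = y)
    & (forall z, B z -> exists2 x, A x & f x = z)].

(* Main.v *)
Require Import Defs.
From mathcomp Require Import all_boot zify.

Definition w := [:: D; U; D].

Lemma infU q : infix w (U :: q) = infix w q.
Proof. by []. Qed.

Lemma inf_nseq k q : infix w (nseq k U ++ q) = infix w q.
Proof. by elim: k => //= k IH; rewrite infU. Qed.

Fixpoint ncp (prev : nat) (s : seq nat) : bool :=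
  if s is x :: s' then (x != prev.+1) && ncp x s' else true.

Lemma keyDUD n prev s : infix w (D :: phi_aux n prev s) = ~~ ncp prev s.
Proof.
elim: s prev => [|x s IH] prev.
  rewrite /=; case: (n - prev) => [|[|m]] //=.
  by rewrite -[nseq _ _]cats0 inf_nseq.
have: (x - prev == 1) = (x == prev.+1) by lia.
rewrite [phi_aux _ _ (_ :: _)]/= [ncp _ (_ :: _)]/=.
case: (x - prev) => [|[|m]] Hx.
- rewrite cat0s infix_consl /= -/(infix w (D :: phi_aux n x s)) IH.
  by rewrite -Hx.
- by rewrite -Hx /= prefix0s.
- by rewrite infix_consl inf_nseq IH -Hx.
Qed.

Lemma DUD_Phi n pi : DUD_free (Phi n pi) = if pi is x :: s then ncp x s else true.
Proof.
rewrite /DUD_free /Phi; case: pi => [|x s] /=.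
  by rewrite -[nseq _ _]cats0 inf_nseq.
rewrite inf_nseq keyDUD negbK; done.
Qed.

Lemma nc_nth x s : ncp x s = [forall i : 'I_(size (x :: s)), (i.+1 < size (x :: s)) ==> (nth 0 (x :: s) i.+1 != (nth 0 (x :: s) i).+1)].
Proof.
apply/idP/forallP.
- elim: s x => [|y s IH] x /=.
    by move=> _ [[|i] Hi].
  case/andP=> Hy /IH H [[|i] Hi] /=; first by [].
  have Hi' : i < size (y :: s) by [].
  exact: (H (Ordinal Hi')).
- elim: s x => [|y s IH] x //= H.
  apply/andP; split.
    by have := H (Ordinal (isT : 0 < (size s).+2)).
  apply: IH => -[i Hi].
  have Hi' : i.+1 < size (x :: y :: s) by [].
  exact: (H (Ordinal Hi')).
Qed.

Lemma DUD_nc n pi : DUD_free (Phi n pi) = no_consec pi.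
Proof.
rewrite DUD_Phi /no_consec; case: pi => [|x s].
  by apply/esym/forallP => -[].
by rewrite nc_nth.
Qed.

Lemma countU_phi n prev s : prev <= n -> path leq prev s -> all (fun x => x <= n) s ->
  count (pred1 U) (phi_aux n prev s) = n - prev.
Proof.
elim: s prev => [|x s IH] prev /= Hp.
  by rewrite count_nseq /= mul1n.
case/andP=> Hx Hs /andP[Hxn Ha].
rewrite count_cat count_nseq /= mul1n add0n IH //. lia.
Qed.

Lemma countD_phi n prev s : count (pred1 D) (phi_aux n prev s) = size s.
Proof.
elim: s prev => [|x s IH] prev /=.
  by rewrite count_nseq /= mul0n.
by rewrite count_cat count_nseq /= mul0n IH.
Qed.

Lemma nseqD_inj a b r r' : nseq a U ++ D :: r = nseq b U ++ D :: r' -> a = b /\ r = r'.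
Proof.
elim: a b => [|a IH] [|b] //=; first by case.
by case=> /IH [-> ->].
Qed.

Lemma phi_inj n prev s t : path leq prev s -> path leq prev t ->
  phi_aux n prev s = phi_aux n prev t -> s = t.
Proof.
elim: s t prev => [|x s IH] [|y t] prev //=.
- move=> _ _ /(congr1 (count (pred1 D))).
  by rewrite count_nseq count_cat count_nseq /= mul0n.
- move=> _ _ /(congr1 (count (pred1 D))).
  by rewrite count_nseq count_cat count_nseq /= mul0n.
case/andP=> Hx Hs /andP[Hy Ht] /nseqD_inj [Hxy Hr].
have exy : x = y by lia.
subst y; congr (_ :: _); exact: IH Hs Ht Hr.
Qed.

Fixpoint dec (c : nat) (p : seq bool) : seq nat :=
  match p with
  | [::] => [::]
  | b :: p' => if b then dec c.+1 p' else c :: dec c p'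
  end.

Lemma dec_path c p : path leq c (dec c p).
Proof.
elim: p c => [|b p IH] c //=; case: b => /=; last by rewrite leqnn IH.
have := IH c.+1; case: (dec c.+1 p) => //= y s /andP[Hy ->].
by rewrite andbT ltnW.
Qed.

Lemma dec_ge c p : all (leq c) (dec c p).
Proof.
elim: p c => [|b p IH] c //=; case: b => /=; last by rewrite leqnn IH.
apply/allP=> x /(allP (IH c.+1)); exact: ltnW.
Qed.

Lemma dec_le c p : all (fun x => x <= c + count (pred1 U) p) (dec c p).
Proof.
elim: p c => [|b p IH] c //=; case: b => /=.
  by rewrite -addSnnS -add1n; exact: IH.
by rewrite add0n leq_addr IH.
Qed.

Lemma dec_size c p : size (dec c p) = count (pred1 D) p.
Proof. by elim: p c => [|b p IH] c //=; case: b => /=; rewrite IH. Qed.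

Lemma phi_shift n c s : c < n -> all (leq c.+1) s ->
  phi_aux n c s = U :: phi_aux n c.+1 s.
Proof.
case: s => [|x s] /= Hc.
  by move=> _; rewrite -(subnSK Hc).
by case/andP=> Hx _; rewrite -(subnSK Hx).
Qed.

Lemma phi_dec n c p : c + count (pred1 U) p = n -> phi_aux n c (dec c p) = p.
Proof.
elim: p c => [|b p IH] c /=.
  by rewrite addn0 => <-; rewrite subnn.
case: b => /= H.
  rewrite phi_shift; last exact: dec_ge. 
    by rewrite IH // -H add1n addSnnS.
  lia.
by rewrite subnn IH //; lia.
Qed.

Ltac gen := repeat match goal with |- context [count ?P ?l] => let x := fresh "c" in set x := count P l; clearbody x end.

Fixpoint dy (b : nat) (p : seq bool) : bool :=
  match p with
  | [::] => true
  | x :: p' => if x then dy b.+1 p' else (0 < b) && dy b.-1 p'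
  end.

Lemma dyP b p : reflect (forall k, count (pred1 D) (take k p) <= b + count (pred1 U) (take k p)) (dy b p).
Proof.
elim: p b => [|x p IH] b /=.
  by apply: ReflectT => k.
case: x.
  apply: (iffP (IH b.+1)) => H k.
    case: k => [|k] /=; first by [].
    have := H k; rewrite /=; gen; lia.
  have := H k.+1; rewrite /=; gen; lia.
apply: (iffP andP).
  case=> Hb /IH H [|k] /=; first by [].
  have := H k; rewrite /=; gen; lia.
move=> H; split; first by have := H 1; rewrite /= take0 /=; lia.
apply/IH => k; have := H k.+1; rewrite /=; gen; lia.
Qed.

Lemma dy_nseq b m q : dy b (nseq m U ++ q) = dy (b + m) q.
Proof. by elim: m b => [|m IH] b /=; rewrite ?addn0 // IH addnS. Qed.

Fixpoint sdp (k : nat) (s : seq nat) : bool :=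
  if s is x :: s' then (k < x) && sdp k.+1 s' else true.

Lemma dy_phi n prev k s : k <= prev -> path leq prev s ->
  dy (prev - k) (phi_aux n prev s) = sdp k s.
Proof.
elim: s prev k => [|x s IH] prev k /= Hk.
  by move=> _; rewrite -[nseq _ _]cats0 dy_nseq.
case/andP=> Hx Hs; rewrite dy_nseq /=.
have -> : prev - k + (x - prev) = x - k by lia.
case: (ltnP k x) => Hkx /=; last by rewrite subn_gt0 ltnNge Hkx.
by rewrite subn_gt0 Hkx /= -subnS IH.
Qed.

Lemma sdp_nth k s : sdp k s = [forall i : 'I_(size s), k + i.+1 <= nth 0 s i].
Proof.
apply/idP/forallP.
- elim: s k => [|y s IH] k /=; first by move=> _ [].
  case/andP=> Hy /IH H [[|i] Hi] /=; first by rewrite addn1.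
  have Hi' : i < size s by [].
  by have := H (Ordinal Hi'); rewrite /= addSnnS.
- elim: s k => [|y s IH] k //= H.
  apply/andP; split.
    by have := H (Ordinal (isT : 0 < (size s).+1)); rewrite /= addn1.
  apply: IH => -[i Hi].
  have Hi' : i.+1 < size (y :: s) by [].
  by have := H (Ordinal Hi'); rewrite /= addSnnS.
Qed.

Lemma superdiag_sdp s : superdiagonal s = sdp 0 s.
Proof. by rewrite sdp_nth. Qed.

Lemma Dyck_dy n p : in_Dyck n p = in_GD n p && dy 0 p.
Proof.
rewrite /in_Dyck; congr (_ && _).
apply/forallP/dyP => H k.
  case: (leqP k (size p)) => Hk.
    by have := H (Ordinal (Hk : k < (size p).+1)).
  rewrite take_oversize ?(ltnW Hk) //.
  by have := H (Ordinal (ltnSn (size p))); rewrite /= take_size.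
exact: H.
Qed.

Lemma inM_prop n pi : in_M n pi ->
  [/\ size pi = n, path leq 0 pi, all (fun x => x <= n) pi & all (leq 1) pi].
Proof.
case/and3P=> /eqP Hs Hso Ha; split => //.
- by case: pi Hso {Hs Ha} => //= x s ->.
- by apply/allP=> x /(allP Ha) /andP[].
- by apply/allP=> x /(allP Ha) /andP[].
Qed.

Lemma GD_Phi n pi : 1 <= n -> in_M n pi -> in_GD n (Phi n pi).
Proof.
move=> Hn /inM_prop [Hs Hp Ha H1].
rewrite /in_GD /Phi countU_phi // subn0 eqxx countD_phi Hs eqxx /=.
case: pi Hs Hp Ha H1 => [|x s] /=; first by move=> Hs; rewrite -Hs in Hn.
by move=> _ _ _ /andP[]; case: x.
Qed.

Lemma Phi_inj n pi pi' : in_M n pi -> in_M n pi' -> Phi n pi = Phi n pi' -> pi = pi'.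
Proof.
move=> /inM_prop [_ Hp _ _] /inM_prop [_ Hp' _ _]; exact: phi_inj.
Qed.

Lemma dec_M n z : in_GD n z -> in_M n (dec 0 z) /\ Phi n (dec 0 z) = z.
Proof.
case/and3P=> /eqP HU /eqP HD Hh; split; last by rewrite /Phi phi_dec.
rewrite /in_M dec_size HD eqxx /=.
rewrite (path_sorted (dec_path 0 z)) /=.
case: z HU Hh {HD} => [|b z] //=; case: b => //= HU _.
apply/allP=> x Hx; rewrite (allP (dec_ge 1 z) x Hx) /=.
by have := allP (dec_le 1 z) x Hx; rewrite -HU add1n.
Qed.

Theorem theorem2 (n : nat) : 1 <= n ->
  bij_between (in_Mstar n) (in_GDstar n) (Phi n) /\
  bij_between (in_Msstar n) (in_Dstar n) (Phi n).
Proof.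
move=> Hn; split; split.
- move=> x /andP[HM Hc]; by rewrite /in_GDstar GD_Phi // DUD_nc.
- move=> x y /andP[Hx _] /andP[Hy _]; exact: Phi_inj.
- move=> z /andP[Hz Hd]; have [HM HP] := @dec_M _ _ Hz.
  exists (dec 0 z) => //; by rewrite /in_Mstar HM -(DUD_nc n) HP.
- move=> x /and3P[HM Hs Hc].
  rewrite /in_Dstar Dyck_dy GD_Phi // DUD_nc Hc andbT /=.
  have [_ Hp _ _] := @inM_prop _ _ HM.
  by rewrite /Phi -(subnn 0) dy_phi // -superdiag_sdp.
- move=> x y /and3P[Hx _ _] /and3P[Hy _ _]; exact: Phi_inj.
- move=> z /andP[]; rewrite Dyck_dy => /andP[Hz Hdy] Hd.
  have [HM HP] := @dec_M _ _ Hz.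
  have [_ Hp _ _] := @inM_prop _ _ HM.
  exists (dec 0 z) => //.
  rewrite /in_Msstar HM -(DUD_nc n) HP Hd andbT /= superdiag_sdp -(@dy_phi n 0 0 _ (leqnn 0) Hp).
  by rewrite subnn -/(Phi n _) HP.
Qed.
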